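(* Let $k\ge 2$ be an integer. For every real $r$, the polynomial $x^k-x^{k-1}-1$ has at most two complex roots $z$ with $|z|=r$. *)

(* Defs.v *)
From mathcomp Require Import all_boot all_order all_algebra.
From mathcomp Require Import complex.
Set Implicit Arguments. Unset Strict Implicit. Unset Printing Implicit Defensive.
Import Order.TTheory GRing.Theory Num.Theory.
Local Open Scope ring_scope.

Definition trinom (C : nzRingType) (k : nat) : {poly C} :=
  'X^k - 'X^(k.-1) - 1.

(* Main.v *)
Require Import Defs.
From mathcomp Require Import all_boot all_order all_algebra.
From mathcomp Require Import complex ring.
Import Order.TTheory GRing.Theory Num.Theory.
Local Open Scope ring_scope.

Lemma key (C : numClosedFieldType) n (c : C) (z w : C) :
  z^+n * (z-1) = 1 -> w^+n*(w-1) = 1 -> `|z| = c -> `|w| = c -> w = z \/ w = z^*.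
Proof.
move=> hz hw nz nw.
have hz' := congr1 (fun x => `|x|) hz; have hw' := congr1 (fun x => `|x|) hw.
rewrite /= normrM normrX nz normr1 in hz'.
rewrite /= normrM normrX nw normr1 in hw'.
have e1 : `|z - 1| = `|w - 1|.
  have cn : c ^+ n != 0 by apply/negP => /eqP e; rewrite e mul0r in hz'; move/eqP: hz'; rewrite eq_sym oner_eq0.
  by apply: (mulfI cn); rewrite hz' hw'.
have A : z * z^* = w * w^* by rewrite -!normCK nz nw.
have B : (z - 1) * (z^* - 1) = (w - 1) * (w^* - 1).
  by have := congr1 (fun x => x ^+ 2) e1; rewrite /= !normCK !rmorphB !rmorph1.
have S : z + z^* = w + w^*.
  have E : forall a b : C, (a - 1) * (b - 1) - a * b = 1 - (a + b) by move=> a b; ring.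
  have := congr2 (fun a b => a - b) B A; rewrite /= !E.
  by move/(addrI 1)/oppr_inj.
have : (w - z) * (w - z^*) = 0.
  have -> : (w - z) * (w - z^*) = w * w - w * (z + z^*) + z * z^* by ring.
  rewrite S A; ring.
move/eqP; rewrite mulf_eq0 !subr_eq0 => /orP[] /eqP; tauto.
Qed.

Theorem mainTheorem5 (R : rcfType) (k : nat) (hk : (2 <= k)%N) (r : R)
  (s : seq R[i]) :
  uniq s ->
  (forall z, z \in s -> root (trinom R[i] k) z /\ `|z| = (r%:C)%C) ->
  (size s <= 2)%N.
Proof.
move=> us hs.
have fac : forall z, z \in s -> z^+(k.-1) * (z - 1) = 1.
  move=> z /hs [rz _]; move: rz; rewrite /root /trinom !hornerE.
  have -> : z ^+ k = z * z ^+ k.-1 by rewrite -exprS prednK // (leq_trans _ hk).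
  by move/eqP => h; apply/eqP; rewrite -subr_eq0 mulrBr mulr1 [_ * z]mulrC -h.
case: s us hs fac => // x t us hs fac.
apply: (leq_trans (uniq_leq_size us (_ : {subset x :: t <= [:: x; x^*]}))) => //.
move=> w hw.
have [->|->] := @key _ _ _ _ _ (fac x (mem_head _ _)) (fac w hw) (proj2 (hs x (mem_head _ _))) (proj2 (hs w hw)).
  by rewrite mem_head.
by rewrite !inE eqxx orbT.
Qed.
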